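(* For $\eta=(\eta_1,\dots,\eta_n)\in\mathbb{Z}_{\ge0}^n$ define $$h_\eta(x;q,t)=\prod_{i=1}^nt^{(i-1)\eta_i}\frac{(t;q)_\infty(q^{\eta_i+1};q)_\infty}{(tq^{\eta_i};q)_\infty(q;q)_\infty}\prod_{i<j}\frac{(q^{\eta_i-\eta_j}x_i/x_j;q)_\infty(q^{1-\eta_j}t^{-1}x_i/x_j;q)_\infty(tx_i/x_j;q)_\infty(q^{1+\eta_i}x_i/x_j;q)_\infty}{(q^{-\eta_j}x_i/x_j;q)_\infty(qt^{-1}x_i/x_j;q)_\infty(tq^{\eta_i}x_i/x_j;q)_\infty(q^{1+\eta_i-\eta_j}x_i/x_j;q)_\infty},$$ and define the operator $\mathbf{N}_n^z=\sum_{\eta_1,\dots,\eta_n=0}^\infty z^{|\eta|}h_\eta(x;q,t)\prod_{i=1}^n(T_{q,x_i})^{\eta_i}$, where $|\eta|=\eta_1+\dots+\eta_n$ and $(T_{q,x_i}F)(x_1,\dots,x_n)=F(x_1,\dots,qx_i,\dots,x_n)$. Then $$\mathbf{N}_n^z=\sum_{\eta_1,\dots,\eta_n=0}^\infty z^{|\eta|}\prod_{i<j}\frac{q^{\eta_j}x_j-q^{\eta_i}x_i}{x_j-x_i}\prod_{i,j=1}^n\frac{(tx_i/x_j;q)_{\eta_i}}{(qx_i/x_j;q)_{\eta_i}}\prod_{i=1}^n(T_{q,x_i})^{\eta_i},$$ i.e. for every $\eta\in\mathbb{Z}_{\ge0}^n$, $h_\eta(x;q,t)=\prod_{i<j}\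frac{q^{\eta_j}x_j-q^{\eta_i}x_i}{x_j-x_i}\prod_{i,j}\frac{(tx_i/x_j;q)_{\eta_i}}{(qx_i/x_j;q)_{\eta_i}}$.
   Context: $q,t\in[0,1)$; $(a;q)_\infty=\prod_{i\ge0}(1-aq^i)$ and $(a;q)_m=(1-a)(1-aq)\cdots(1-aq^{m-1})$. The identity is between functions of the formal/complex variables $x_1,\dots,x_n$ (meromorphic functions), coefficientwise in $z$. *)

(* Defs.v *)
From Stdlib Require Import Reals ZArith.
From Coquelicot Require Import Coquelicot.
Open Scope R_scope.

Fixpoint qpoch (a : C) (q : R) (m : nat) : C :=
  match m with
  | O => RtoC 1
  | S m' => Cmult (qpoch a q m') (Cminus (RtoC 1) (Cmult a (RtoC (q ^ m'))))
  end.

(* Infinite q-Pochhammer symbol (a;q)_oo = lim_m (a;q)_m, taken componentwise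
   (the limit exists for |q| < 1). *)
Definition qinf (a : C) (q : R) : C :=
  (real (Lim_seq (fun m => fst (qpoch a q m))),
   real (Lim_seq (fun m => snd (qpoch a q m)))).

Fixpoint prodC (f : nat -> C) (n : nat) : C :=
  match n with
  | O => RtoC 1
  | S n' => Cmult (prodC f n') (f n')
  end.

Definition qZ (q : R) (z : Z) : C := RtoC (powerRZ q z).

(* h_eta(x;q,t); variables x_1..x_n are x 0 .. x (n-1), eta_i is eta (i-1). *)
Definition h_eta (n : nat) (x : nat -> C) (q t : R) (eta : nat -> nat) : C :=
  Cmult
   (prodC (fun i =>
      Cdiv (Cmult (RtoC (t ^ (i * eta i)))
                  (Cmult (qinf (RtoC t) q) (qinf (RtoC (q ^ (eta i + 1))) q)))
           (Cmult (qinf (RtoC (t * q ^ eta i)) q) (qinf (RtoC q) q))) n)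
   (prodC (fun j => prodC (fun i =>
      let r := Cdiv (x i) (x j) in
      let ei := Z.of_nat (eta i) in let ej := Z.of_nat (eta j) in
      Cdiv
        (Cmult (Cmult (Cmult
           (qinf (Cmult (qZ q (ei - ej)) r) q)
           (qinf (Cmult (RtoC (powerRZ q (1 - ej) / t)) r) q))
           (qinf (Cmult (RtoC t) r) q))
           (qinf (Cmult (qZ q (1 + ei)) r) q))
        (Cmult (Cmult (Cmult
           (qinf (Cmult (qZ q (- ej)) r) q)
           (qinf (Cmult (RtoC (q / t)) r) q))
           (qinf (Cmult (RtoC (t * q ^ eta i)) r) q))
           (qinf (Cmult (qZ q (1 + ei - ej)) r) q))) j) n).

Definition h_eta_closed (n : nat) (x : nat -> C) (q t : R) (eta : nat -> nat) : C :=
  Cmult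
   (prodC (fun j => prodC (fun i =>
      Cdiv (Cminus (Cmult (RtoC (q ^ eta j)) (x j)) (Cmult (RtoC (q ^ eta i)) (x i)))
           (Cminus (x j) (x i))) j) n)
   (prodC (fun i => prodC (fun j =>
      Cdiv (qpoch (Cmult (RtoC t) (Cdiv (x i) (x j))) q (eta i))
           (qpoch (Cmult (RtoC q) (Cdiv (x i) (x j))) q (eta i))) n) n).

(* Main.v *)
Require Import Defs.
From Stdlib Require Import Reals ZArith Lra Lia.
From Coquelicot Require Import Coquelicot.
Open Scope R_scope.

Section SA.

Lemma telesc (u : nat -> R) n : sum_n (fun k => u (S k) - u k) n = u (S n) - u O.
Proof.
  induction n. rewrite sum_O. reflexivity.
  rewrite sum_Sn, IHn. unfold plus; simpl. ring.
Qed.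

Lemma conv_R (u : nat -> R) K q : 0 <= q < 1 ->
  (forall n, Rabs (u (S n) - u n) <= K * q^n) -> exists l : R, is_lim_seq u l.
Proof.
  intros Hq H.
  assert (Hs : ex_series (fun n => u (S n) - u n)).
  { apply (@ex_series_le R_AbsRing R_CompleteNormedModule _ (fun n => K * q^n)). intros n; apply H.
    apply (@ex_series_scal_l R_AbsRing R_NormedModule K (fun n => q^n)). apply ex_series_geom.
    rewrite Rabs_pos_eq; lra. }
  destruct Hs as [l Hl]. exists (u O + l).
  apply is_lim_seq_incr_1.
  apply is_lim_seq_ext with (fun n => u O + sum_n (fun k => u (S k) - u k) n).
  intros n; rewrite telesc; ring.
  apply is_lim_seq_plus'. apply is_lim_seq_const. exact Hl.
Qed.

End SA.

Section SB.

Lemma qpoch_bound a q m : 0 <= q < 1 ->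
  Cmod (qpoch a q m) <= exp (Cmod a * ((1 - q^m)/(1-q))).
Proof.
  intros Hq. induction m.
  - simpl. rewrite Cmod_1. replace (Cmod a * ((1 - 1) / (1 - q))) with 0 by (field; lra).
    rewrite exp_0; lra.
  - simpl qpoch. rewrite Cmod_mult.
    assert (H1 : Cmod (Cminus (RtoC 1) (Cmult a (RtoC (q ^ m)))) <= 1 + Cmod a * q^m).
    { unfold Cminus. eapply Rle_trans. apply Cmod_triangle.
      rewrite Cmod_opp, Cmod_mult, Cmod_R, Cmod_R, Rabs_R1, Rabs_pos_eq. lra.
      apply pow_le; lra. }
    replace (Cmod a * ((1 - q ^ S m) / (1 - q))) with
       (Cmod a * ((1 - q ^ m) / (1 - q)) + Cmod a * q^m) by (simpl; field; lra).
    rewrite exp_plus. apply Rmult_le_compat. apply Cmod_ge_0. apply Cmod_ge_0.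
    exact IHm. eapply Rle_trans. exact H1. apply exp_ineq1_le.
Qed.

Lemma exp_mono x y : x <= y -> exp x <= exp y.
Proof. intros H. destruct (Rle_lt_or_eq_dec _ _ H). left; apply exp_increasing; auto. subst; lra. Qed.

Lemma qpoch_bound' a q m : 0 <= q < 1 ->
  Cmod (qpoch a q m) <= exp (Cmod a / (1-q)).
Proof.
  intros Hq. eapply Rle_trans. apply qpoch_bound; auto.
  apply exp_mono. unfold Rdiv. rewrite <- Rmult_assoc. rewrite (Rmult_comm (Cmod a)).
  rewrite Rmult_assoc. rewrite <- (Rmult_1_l (Cmod a * / (1 - q))) at 2.
  apply Rmult_le_compat_r. apply Rmult_le_pos. apply Cmod_ge_0.
  left; apply Rinv_0_lt_compat; lra.
  assert (0 <= q^m) by (apply pow_le; lra). lra.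
Qed.

Lemma qpoch_diff a q m : Cminus (qpoch a q (S m)) (qpoch a q m) =
   Copp (Cmult (qpoch a q m) (Cmult a (RtoC (q^m)))).
Proof. simpl qpoch. ring. Qed.

Lemma qpoch_cv a q : 0 <= q < 1 ->
  (exists l : R, is_lim_seq (fun m => fst (qpoch a q m)) l) /\
  (exists l : R, is_lim_seq (fun m => snd (qpoch a q m)) l).
Proof.
  intros Hq. set (K := exp (Cmod a / (1-q)) * Cmod a).
  assert (HD : forall m, Cmod (Cminus (qpoch a q (S m)) (qpoch a q m)) <= K * q^m).
  { intros m. rewrite qpoch_diff, Cmod_opp, Cmod_mult, Cmod_mult, Cmod_R, Rabs_pos_eq.
    unfold K. rewrite Rmult_assoc. apply Rmult_le_compat_r.
    apply Rmult_le_pos. apply Cmod_ge_0. apply pow_le; lra.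
    apply qpoch_bound'; auto. apply pow_le; lra. }
  split; apply (conv_R _ K q Hq); intros m; eapply Rle_trans; try apply (HD m);
    eapply Rle_trans; try apply Rmax_Cmod.
  apply Rmax_l. apply Rmax_r.
Qed.

Lemma qinf_lim a q : 0 <= q < 1 ->
  is_lim_seq (fun m => fst (qpoch a q m)) (fst (qinf a q)) /\
  is_lim_seq (fun m => snd (qpoch a q m)) (snd (qinf a q)).
Proof.
  intros Hq. destruct (qpoch_cv a q Hq) as [[l1 H1] [l2 H2]].
  unfold qinf; simpl. rewrite (is_lim_seq_unique _ _ H1), (is_lim_seq_unique _ _ H2).
  simpl. split. exact H1. exact H2.
Qed.

Lemma lim_uniq u (l1 l2 : R) : is_lim_seq u l1 -> is_lim_seq u l2 -> l1 = l2.
Proof.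
  intros H1 H2. apply is_lim_seq_unique in H1. apply is_lim_seq_unique in H2.
  rewrite H1 in H2. injection H2; auto.
Qed.

Lemma qpoch_add a q k m :
  qpoch a q (k + m) = Cmult (qpoch a q k) (qpoch (Cmult a (RtoC (q^k))) q m).
Proof.
  induction m.
  - rewrite Nat.add_0_r. simpl. ring.
  - rewrite Nat.add_succ_r. simpl qpoch. rewrite IHm, pow_add, RtoC_mult. ring.
Qed.

Lemma qinf_split a q k : 0 <= q < 1 ->
  qinf a q = Cmult (qpoch a q k) (qinf (Cmult a (RtoC (q^k))) q).
Proof.
  intros Hq.
  destruct (qinf_lim a q Hq) as [H1 H2].
  destruct (qinf_lim (Cmult a (RtoC (q^k))) q Hq) as [H3 H4].
  set (P := qpoch a q k) in *. set (b := Cmult a (RtoC (q^k))) in *.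
  apply (is_lim_seq_incr_n _ k) in H1. apply (is_lim_seq_incr_n _ k) in H2.
  assert (E : forall m, qpoch a q (m + k) = Cmult P (qpoch b q m)).
  { intros m. rewrite Nat.add_comm. apply qpoch_add. }
  apply injective_projections; cbn [Cmult fst snd].
  - eapply lim_uniq. apply H1.
    apply is_lim_seq_ext with (fun m => fst P * fst (qpoch b q m) - snd P * snd (qpoch b q m)).
    intros m; rewrite E; reflexivity.
    apply is_lim_seq_minus'; (apply is_lim_seq_mult'; [apply is_lim_seq_const | auto]).
  - eapply lim_uniq. apply H2.
    apply is_lim_seq_ext with (fun m => fst P * snd (qpoch b q m) + snd P * fst (qpoch b q m)).
    intros m; rewrite E; reflexivity.
    apply is_lim_seq_plus'; (apply is_lim_seq_mult'; [apply is_lim_seq_const | auto]).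
Qed.

Lemma pow_le_one q m : 0 <= q <= 1 -> q^m <= 1.
Proof. intros H. rewrite <- (pow1 m). apply pow_incr; lra. Qed.

Lemma qpoch_real c q m : 0 <= q < 1 -> 0 <= c <= 1 ->
  snd (qpoch (RtoC c) q m) = 0 /\
  1 - c * ((1 - q^m)/(1-q)) <= fst (qpoch (RtoC c) q m) /\
  (c < 1 -> 0 < fst (qpoch (RtoC c) q m)).
Proof.
  intros Hq Hc. induction m.
  - simpl. split; [reflexivity|]. split. replace ((1 - 1) / (1 - q)) with 0 by (field; lra). lra. lra.
  - destruct IHm as [H1 [H2 H3]].
    assert (Hp : 0 <= q^m <= 1). { split. apply pow_le; lra. apply pow_le_one; lra. }
    assert (Hs : 0 <= (1 - q^m)/(1-q)). { apply Rmult_le_pos. lra. left; apply Rinv_0_lt_compat; lra. }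
    simpl qpoch. cbn [Cmult Cminus Cplus Copp RtoC fst snd]. rewrite H1.
    split. ring.
    split.
    + replace (1 - c * ((1 - q ^ S m) / (1 - q))) with (1 - c * ((1 - q ^ m) / (1 - q)) - c * q^m) by (simpl; field; lra).
      set (P := fst (qpoch c q m)) in *. set (Sm := (1 - q ^ m) / (1 - q)) in *.
      assert (c*q^m <= 1) by nra.
      assert (P * (1 - c*q^m) >= (1 - c*Sm) * (1 - c*q^m)).
      { apply Rmult_ge_compat_r; lra. }
      assert (0 <= c*Sm*(c*q^m)). { apply Rmult_le_pos; apply Rmult_le_pos; lra. }
      nra.
    + intros Hc1. assert (c * q^m < 1) by nra.
      set (P := fst (qpoch c q m)) in *. specialize (H3 Hc1). nra.
Qed.

Lemma qinf_real_nz c q : 0 <= q < 1 -> 0 <= c < 1 -> qinf (RtoC c) q <> RtoC 0.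
Proof.
  intros Hq Hc.
  destruct (pow_lt_1_zero q) with ((1-q)/2) as [K HK].
  rewrite Rabs_pos_eq; lra. lra.
  specialize (HK K (le_n K)). rewrite Rabs_pos_eq in HK by (apply pow_le; lra).
  assert (Hp : 0 <= q^K <= 1). { split. apply pow_le; lra. apply pow_le_one; lra. }
  rewrite (qinf_split _ _ K Hq).
  apply Cmult_neq_0.
  - intros E. destruct (qpoch_real c q K Hq ltac:(lra)) as [_ [_ H3]].
    apply (f_equal fst) in E. simpl in E. specialize (H3 (proj2 Hc)). lra.
  - rewrite <- RtoC_mult. set (d := c * q^K).
    assert (Hd : 0 <= d <= 1) by (unfold d; nra).
    assert (Hd2 : d / (1-q) <= 1/2).
    { unfold Rdiv. apply (Rmult_le_reg_r (1-q)). lra. rewrite Rmult_assoc, Rinv_l by lra. unfold d. nra. }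
    destruct (qinf_lim d q Hq) as [H1 _].
    intros E. rewrite E in H1. simpl in H1.
    assert (Hle := is_lim_seq_le (fun _ => 1/2) (fun m => fst (qpoch d q m)) (1/2) 0).
    simpl in Hle. apply Hle in H1. lra.
    2: apply is_lim_seq_const.
    intros m. destruct (qpoch_real d q m Hq Hd) as [_ [H2 _]].
    assert (0 <= q^m <= 1). { split. apply pow_le; lra. apply pow_le_one; lra. }
    assert (d * ((1 - q ^ m) / (1 - q)) <= d / (1-q)).
    { unfold Rdiv. rewrite <- Rmult_assoc. rewrite (Rmult_comm d).  rewrite Rmult_assoc.
      rewrite <- (Rmult_1_l (d * / (1 - q))) at 2. apply Rmult_le_compat_r.
      apply Rmult_le_pos. lra. left; apply Rinv_0_lt_compat; lra. lra. }
    lra.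
Qed.

End SB.

Section SQ.
Local Open Scope C_scope.

Lemma qpoch_head c d q N : d = c * RtoC q -> qpoch c q (S N) = (1 - c) * qpoch d q N.
Proof.
  intros ->. change (S N) with (1 + N)%nat. rewrite qpoch_add. simpl.
  rewrite Rmult_1_r. f_equal. ring.
Qed.

Lemma RtoC_pow_S (q : R) N : RtoC (q ^ S N) = RtoC q * RtoC (q ^ N).
Proof. simpl. apply RtoC_mult. Qed.

Lemma refl_id (q t : R) (s : C) b : q <> 0%R -> t <> 0%R -> s <> 0 ->
  qpoch (RtoC t / (RtoC (q^b) * s)) q b * qpoch s q b * RtoC (q^b) =
  RtoC (t^b) * qpoch (RtoC q * s / RtoC t) q b * qpoch (RtoC q / (RtoC (q^b) * s)) q b.
Proof.
  intros Hq Ht Hs.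
  assert (Hq' : RtoC q <> 0) by (intros E; apply Hq; injection E; auto).
  assert (Ht' : RtoC t <> 0) by (intros E; apply Ht; injection E; auto).
  induction b.
  - simpl. ring.
  - assert (Hqb : RtoC (q ^ b) <> 0).
    { intros E; injection E; intros; apply (pow_nonzero q b Hq); auto. }
    rewrite (qpoch_head _ (RtoC t / (RtoC (q ^ b) * s))).
    2: { rewrite RtoC_pow_S. field. repeat split; auto. }
    rewrite (qpoch_head (RtoC q / (RtoC (q ^ S b) * s)) (RtoC q / (RtoC (q ^ b) * s))).
    2: { rewrite RtoC_pow_S. field; repeat split; auto. }
    simpl qpoch at 2 3.
    set (X := qpoch (RtoC t / (RtoC (q ^ b) * s)) q b) in *.
    set (Y := qpoch s q b) in *.
    set (Z := qpoch (RtoC q * s / RtoC t) q b) in *.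
    set (W := qpoch (RtoC q / (RtoC (q ^ b) * s)) q b) in *.
    rewrite !RtoC_pow_S.
    transitivity ((1 - RtoC t / (RtoC q * RtoC (q ^ b) * s)) * (1 - s * RtoC (q ^ b)) * RtoC q * (X * Y * RtoC (q^b))).
    ring.
    rewrite IHb.
    field; repeat split; auto.
Qed.

Section PZ.
Local Open Scope R_scope.
Lemma powerRZ_one q : powerRZ q 1 = q.
Proof. simpl. ring. Qed.
Lemma pz1 q a b : q <> 0 -> powerRZ q (Z.of_nat a - Z.of_nat b) = q^a * / q^b.
Proof. intros. unfold Z.sub. rewrite powerRZ_add, powerRZ_neg', <- !pow_powerRZ; auto. Qed.
Lemma pz2 q b : q <> 0 -> powerRZ q (1 - Z.of_nat b) = q * / q^b.
Proof. intros. unfold Z.sub. rewrite powerRZ_add, powerRZ_neg', <- !pow_powerRZ, powerRZ_one; auto. Qed.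
Lemma pz3 q a : q <> 0 -> powerRZ q (1 + Z.of_nat a) = q * q^a.
Proof. intros. rewrite powerRZ_add, <- !pow_powerRZ, powerRZ_one; auto. Qed.
Lemma pz4 q b : powerRZ q (- Z.of_nat b) = / q^b.
Proof. intros. rewrite powerRZ_neg', <- !pow_powerRZ; auto. Qed.
Lemma pz5 q a b : q <> 0 -> powerRZ q (1 + Z.of_nat a - Z.of_nat b) = q * q^a * / q^b.
Proof. intros. unfold Z.sub. rewrite !powerRZ_add, powerRZ_neg', <- !pow_powerRZ, powerRZ_one; auto. Qed.
End PZ.

Lemma qinf_split2 z z' w q k : 0 <= q < 1 -> z = z' -> w = z' * RtoC (q^k) ->
  qinf z q = qpoch z' q k * qinf w q.
Proof. intros Hq -> ->. apply qinf_split; auto. Qed.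

Lemma pair_id (q t : R) (xi xj : C) (a b : nat) : (0 < q < 1)%R -> (0 < t < 1)%R ->
  xi <> RtoC 0 -> xj <> RtoC 0 -> xi <> xj ->
  qinf (Cmult (qZ q (- Z.of_nat b)) (Cdiv xi xj)) q <> RtoC 0 ->
  qinf (Cmult (RtoC (q / t)) (Cdiv xi xj)) q <> RtoC 0 ->
  qinf (Cmult (RtoC (t * q ^ a)) (Cdiv xi xj)) q <> RtoC 0 ->
  qinf (Cmult (qZ q (1 + Z.of_nat a - Z.of_nat b)) (Cdiv xi xj)) q <> RtoC 0 ->
  qpoch (Cmult (RtoC q) (Cdiv xi xj)) q a <> RtoC 0 ->
  qpoch (Cmult (RtoC q) (Cdiv xj xi)) q b <> RtoC 0 ->
  Cmult (let r := Cdiv xi xj in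
      let ei := Z.of_nat a in let ej := Z.of_nat b in
      Cdiv
        (Cmult (Cmult (Cmult
           (qinf (Cmult (qZ q (ei - ej)) r) q)
           (qinf (Cmult (RtoC (powerRZ q (1 - ej) / t)) r) q))
           (qinf (Cmult (RtoC t) r) q))
           (qinf (Cmult (qZ q (1 + ei)) r) q))
        (Cmult (Cmult (Cmult
           (qinf (Cmult (qZ q (- ej)) r) q)
           (qinf (Cmult (RtoC (q / t)) r) q))
           (qinf (Cmult (RtoC (t * q ^ a)) r) q))
           (qinf (Cmult (qZ q (1 + ei - ej)) r) q))) (RtoC (t ^ b))
  = Cmult (Cmult
      (Cdiv (Cminus (Cmult (RtoC (q ^ b)) xj) (Cmult (RtoC (q ^ a)) xi)) (Cminus xj xi))
      (Cdiv (qpoch (Cmult (RtoC t) (Cdiv xi xj)) q a)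
            (qpoch (Cmult (RtoC q) (Cdiv xi xj)) q a)))
      (Cdiv (qpoch (Cmult (RtoC t) (Cdiv xj xi)) q b)
            (qpoch (Cmult (RtoC q) (Cdiv xj xi)) q b)).
Proof.
  intros Hq Ht Hi Hj Hij HD1 HD2 HD3 HD4 HA4 HW. cbv zeta.
  assert (Hq0 : q <> 0%R) by lra. assert (Ht0 : t <> 0%R) by lra.
  assert (Hq' : RtoC q <> 0) by (intros E; apply Hq0; injection E; auto).
  assert (Ht' : RtoC t <> 0) by (intros E; apply Ht0; injection E; auto).
  assert (Hqb : RtoC (q ^ b) <> 0).
  { intros E; injection E; intros; apply (pow_nonzero q b Hq0); auto. }
  assert (Hqa : RtoC (q ^ a) <> 0).
  { intros E; injection E; intros; apply (pow_nonzero q a Hq0); auto. }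
  assert (Hq1 : (0 <= q < 1)%R) by lra.
  unfold qZ in *.
  rewrite pz1, pz2, pz3 by auto. rewrite pz4 in HD1 |- *. rewrite pz5 in HD4 |- * by auto.
  set (r := xi / xj) in *.
  set (e := / RtoC (q ^ b)).
  assert (Ee : RtoC (/ q ^ b) = e) by (unfold e; rewrite RtoC_inv; auto; apply pow_nonzero; auto).
  set (N4 := qinf (RtoC (q * q ^ a) * r) q).
  set (D2 := qinf (RtoC (q / t) * r) q) in *.
  set (D3 := qinf (RtoC (t * q ^ a) * r) q) in *.
  set (D4 := qinf (RtoC (q * q ^ a * / q ^ b) * r) q) in *.
  assert (E1 : qinf (RtoC (q ^ a * / q ^ b) * r) q = (1 - RtoC (q^a) * e * r) * D4).
  { rewrite (qinf_split2 _ (RtoC (q ^ a) * e * r) (RtoC (q * q ^ a * / q ^ b) * r) q 1 Hq1).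
    simpl. unfold D4. ring.
    rewrite RtoC_mult, Ee. reflexivity.
    rewrite RtoC_mult, RtoC_mult, Ee. simpl. rewrite Rmult_1_r. ring. }
  assert (E2 : qinf (RtoC (q * / q ^ b / t) * r) q = qpoch (RtoC q * (e * r) / RtoC t) q b * D2).
  { apply qinf_split2; auto.
    rewrite RtoC_div, RtoC_mult, Ee by auto. field. auto.
    rewrite RtoC_div by auto. unfold e. field. auto. }
  assert (E3 : qinf (RtoC t * r) q = qpoch (RtoC t * r) q a * D3).
  { apply qinf_split2; auto. unfold D3. rewrite RtoC_mult. ring. }
  assert (E4 : qinf (RtoC (/ q ^ b) * r) q =
     qpoch (e * r) q b * ((1 - r) * qpoch (RtoC q * r) q a) * N4).
  { rewrite (qinf_split2 _ (e * r) (RtoC (q * q ^ a) * r) q (b + S a) Hq1).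
    rewrite qpoch_add. rewrite (qpoch_head (e * r * RtoC (q ^ b)) (RtoC q * r)).
    f_equal. f_equal. f_equal. unfold e. field. auto.
    unfold e. field. auto.
    rewrite Ee; reflexivity.
    unfold e. rewrite pow_add, !RtoC_mult, RtoC_pow_S. field. auto. }
  rewrite E1, E2, E3, E4. rewrite E4 in HD1.
  assert (HR := refl_id q t (e * r) b Hq0 Ht0).
  replace (RtoC t / (RtoC (q ^ b) * (e * r))) with (RtoC t * (xj / xi)) in HR.
  2: { unfold r, e. field. repeat split; auto. }
  replace (RtoC q / (RtoC (q ^ b) * (e * r))) with (RtoC q * (xj / xi)) in HR.
  2: { unfold r, e. field. repeat split; auto. }
  assert (Hr : r <> 0).
  { intros E. apply Hi. assert (xi = r * xj) by (unfold r; field; auto). rewrite H, E. ring. }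
  assert (He : e <> 0).
  { intros E. assert (H1 : e * RtoC (q^b) = 1) by (unfold e; field; auto).
    rewrite E in H1. assert (H2 : RtoC 0 = RtoC 1) by (rewrite <- H1; ring).
    injection H2. lra. }
  specialize (HR ltac:(apply Cmult_neq_0; auto)).
  set (X := qpoch (RtoC t * (xj / xi)) q b) in *.
  set (Y := qpoch (e * r) q b) in *.
  set (Z := qpoch (RtoC q * (e * r) / RtoC t) q b) in *.
  set (W := qpoch (RtoC q * (xj / xi)) q b) in *.
  set (A2 := qpoch (RtoC t * r) q a) in *.
  set (A4 := qpoch (RtoC q * r) q a) in *.
  assert (HY : Y <> 0). { intros E; apply HD1; rewrite E; ring. }
  assert (HN4 : N4 <> 0). { intros E; apply HD1; rewrite E; ring. }
  assert (Hr1 : 1 - r <> 0).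
  { intros E. apply Hij. assert (xi = r * xj) by (unfold r; field; auto).
    assert (r = 1) by (rewrite <- (Cplus_0_l r), <- E; ring). rewrite H, H0. ring. }
  assert (Hji : xj - xi <> 0). { intros E. apply Hij. rewrite <- (Cplus_0_l xi), <- E. ring. }
  assert (Htb : RtoC (t ^ b) <> 0).
  { intros E; injection E; intros; apply (pow_nonzero t b Ht0); auto. }
  assert (HZ : Z = X * Y * RtoC (q ^ b) / (RtoC (t ^ b) * W)).
  { rewrite HR. field. auto. }
  rewrite HZ. unfold r, e. field. repeat split; auto.
Qed.

End SQ.

Section SP.
Local Open Scope C_scope.

Lemma prodC_mult f g n : prodC (fun k => f k * g k) n = prodC f n * prodC g n.
Proof. induction n; simpl. ring. rewrite IHn. ring. Qed.

Lemma prodC_ext f g n : (forall k, (k < n)%nat -> f k = g k) -> prodC f n = prodC g n.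
Proof.
  induction n; intros H; simpl. reflexivity.
  rewrite IHn by (intros; apply H; lia). rewrite H by lia. reflexivity.
Qed.

Lemma prodC_const_pow (t : R) a i : RtoC (t ^ (i * a)) = prodC (fun _ => RtoC (t ^ a)) i.
Proof.
  induction i; simpl. reflexivity.
  rewrite <- IHi. rewrite <- RtoC_mult, <- pow_add. f_equal. f_equal. lia.
Qed.

Lemma prodC_double (G : nat -> nat -> C) n :
  prodC (fun i => prodC (fun j => G i j) n) n =
  prodC (fun j => G j j * prodC (fun i => G i j * G j i) j) n.
Proof.
  induction n. reflexivity.
  change (prodC (fun i => prodC (fun j => G i j) (S n)) (S n) =
    prodC (fun j => G j j * prodC (fun i => G i j * G j i) j) n *
    (G n n * prodC (fun i => G i n * G n i) n)).
  rewrite <- IHn. clear IHn.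
  transitivity (prodC (fun i => prodC (fun j => G i j) n * G i n) n *
     (prodC (fun j => G n j) n * G n n)). reflexivity.
  rewrite prodC_mult. rewrite (prodC_mult (fun i => G i n) (fun i => G n i)). ring.
Qed.

Lemma assemble (n:nat) (Dg : nat -> C) (F V G : nat -> nat -> C) (T : nat -> C) :
 (forall j, (j < n)%nat -> Dg j = prodC (fun _ => T j) j * G j j) ->
 (forall i j, (i < j < n)%nat -> F i j * T j = V i j * (G i j * G j i)) ->
 prodC Dg n * prodC (fun j => prodC (fun i => F i j) j) n =
 prodC (fun j => prodC (fun i => V i j) j) n * prodC (fun i => prodC (fun j => G i j) n) n.
Proof.
  intros HD HF. rewrite prodC_double.
  rewrite (prodC_ext Dg (fun j => prodC (fun _ => T j) j * G j j)) by auto.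
  rewrite <- !prodC_mult. apply prodC_ext. intros j Hj.
  transitivity (G j j * prodC (fun i => F i j * T j) j).
  rewrite prodC_mult. ring.
  transitivity (G j j * prodC (fun i => V i j * (G i j * G j i)) j).
  f_equal. apply prodC_ext. intros i Hi. apply HF. lia.
  rewrite prodC_mult. ring.
Qed.

End SP.

Section SM.
Local Open Scope C_scope.

Lemma diag_id (q t : R) (x : C) (i a : nat) : (0 < q < 1)%R -> (0 < t < 1)%R -> x <> RtoC 0 ->
  qpoch (Cmult (RtoC q) (Cdiv x x)) q a <> RtoC 0 ->
  Cdiv (Cmult (RtoC (t ^ (i * a)))
                  (Cmult (qinf (RtoC t) q) (qinf (RtoC (q ^ (a + 1))) q)))
           (Cmult (qinf (RtoC (t * q ^ a)) q) (qinf (RtoC q) q))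
  = RtoC (t ^ (i * a)) * Cdiv (qpoch (Cmult (RtoC t) (Cdiv x x)) q a)
                               (qpoch (Cmult (RtoC q) (Cdiv x x)) q a).
Proof.
  intros Hq Ht Hx HA.
  assert (Hq1 : (0 <= q < 1)%R) by lra.
  replace (Cmult (RtoC t) (Cdiv x x)) with (RtoC t) by (field; auto).
  replace (Cmult (RtoC q) (Cdiv x x)) with (RtoC q) in * by (field; auto).
  rewrite (qinf_split2 (RtoC t) (RtoC t) (RtoC (t * q ^ a)) q a Hq1); auto.
  2: apply RtoC_mult.
  rewrite (qinf_split2 (RtoC q) (RtoC q) (RtoC (q ^ (a + 1))) q a Hq1); auto.
  2: { rewrite <- RtoC_mult. f_equal. rewrite pow_add. simpl. ring. }
  assert (H1 : qinf (RtoC (t * q ^ a)) q <> 0).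
  { apply qinf_real_nz; auto. assert (0 < q^a <= 1)%R by (split; [apply pow_lt; lra | apply pow_le_one; lra]). nra. }
  assert (H2 : qinf (RtoC (q ^ (a + 1))) q <> 0).
  { apply qinf_real_nz; auto. rewrite pow_add. assert (0 < q^a <= 1)%R by (split; [apply pow_lt; lra | apply pow_le_one; lra]). simpl. nra. }
  field. repeat split; auto.
Qed.


End SM.

Theorem proposition3p8 (n : nat) (q t : R) (x : nat -> C) (eta : nat -> nat) :
  0 < q < 1 -> 0 < t < 1 ->
  (forall i, (i < n)%nat -> x i <> RtoC 0) ->
  (forall i j, (i < j < n)%nat -> x i <> x j) ->
  (* the infinite-product denominators of h_eta are nonzero *)
  (forall i j, (i < j < n)%nat ->
     let r := Cdiv (x i) (x j) in
     let ei := Z.of_nat (eta i) in let ej := Z.of_nat (eta j) in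
     qinf (Cmult (qZ q (- ej)) r) q <> RtoC 0 /\
     qinf (Cmult (RtoC (q / t)) r) q <> RtoC 0 /\
     qinf (Cmult (RtoC (t * q ^ eta i)) r) q <> RtoC 0 /\
     qinf (Cmult (qZ q (1 + ei - ej)) r) q <> RtoC 0) ->
  (* the finite-product denominators of the closed form are nonzero *)
  (forall i j, (i < n)%nat -> (j < n)%nat ->
     qpoch (Cmult (RtoC q) (Cdiv (x i) (x j))) q (eta i) <> RtoC 0) ->
  h_eta n x q t eta = h_eta_closed n x q t eta.
Proof.
  intros Hq Ht Hx Hd Hinf Hfin. unfold h_eta, h_eta_closed.
  apply assemble with (T := fun j => RtoC (t ^ eta j)).
  - intros j Hj. rewrite <- prodC_const_pow. apply diag_id; auto.
  - intros i j Hij. destruct (Hinf i j Hij) as [H1 [H2 [H3 H4]]].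
    eapply eq_trans. apply (pair_id q t (x i) (x j) (eta i) (eta j)); auto.
    apply Hx; lia. apply Hx; lia. apply Hfin; lia. apply Hfin; lia.
    ring.
Qed.
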